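(* Let $p$ be a prime, let $G,H$ be finite groups, and let $U\leq G\times H$ be a subdirect product. Write $K=k_1(U)$ and $q(U)=G/K$. Then $U$ is $p$-extensible if one of the following conditions holds: (i) the $p$-primary part of the Schur multiplier $M(q(U))=H_2(q(U),\mathbb{Z})$ is trivial; (ii) the $p$-primary component of the coinflation map $\alpha: H_2(G,\mathbb{Z})\to H_2(G/K,\mathbb{Z})$ is surjective.
   Context: For finite groups $G,H$ and $U\leq G\times H$: $p_1(U)=\{g\in G:\exists h,(g,h)\in U\}$, $p_2(U)=\{h\in H:\exists g,(g,h)\in U\}$, $k_1(U)=\{g\in G:(g,1)\in U\}$, $k_2(U)=\{h\in H:(1,h)\in U\}$. $U$ is a subdirect product if $p_1(U)=G$ and $p_2(U)=H$. The Goursat quotient is $q(U)=p_1(U)/k_1(U)$ (isomorphic to $p_2(U)/k_2(U)$). An abelian group $A$ satisfies the Hypothesis (with set of primes $\pi$) if there is a unique set of primes $\pi$ such that for every $n\in\mathbb{N}$ the $n$-torsion part of $A$ is cyclic of order $n_\pi$ (the $\pi$-part of $n$). $U$ is $A$-extensible if every homomorphism $U\to A$ extends to a homomorphism $G\times H\to A$. $U$ is $p$-extensible if it is $A$-extensible for every abelian group $A$ satisfying the Hypothesis with $\pi=\{p\}$. The coinflation map is the first map $\alpha$ in the five-term exact sequence $H_2(G)\xrightarrow{\alpha} H_2(G/K)\to H_1(K)_{G/K}\to H_1(G)\to H_1(G/K)\to 0$ of the extension $1\to K\to G\to G/K\to 1$ (induced by the projection $G\to G/K$); homology is with integer coefficients.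 *)

(* Defs.v *)
From HB Require Import structures.
From mathcomp Require Import all_boot all_order all_algebra all_fingroup all_solvable.
Set Implicit Arguments. Unset Strict Implicit. Unset Printing Implicit Defensive.
Import GRing.Theory.
Local Open Scope group_scope.

Definition k1 (gT1 gT2 : finGroupType) (U : {set gT1 * gT2}) : {set gT1} :=
  [set g | (g, 1) \in U].

(* ---------- Integral group homology H_2 via the (inhomogeneous) bar complex ----------
   For a subgroup Q of a finGroupType T:
   C_n(Q) = free abelian group on Q^n, represented as integer-valued functions on T^n
   supported in Q^n.
   d2 [g|h]   = [h] - [gh] + [g]
   d3 [g|h|k] = [h|k] - [gh|k] + [g|hk] - [g|h]
   H_2(Q; Z) = ker d2 / im d3. *)

Definition chain1 (T : finGroupType) := {ffun T -> int}.
Definition chain2 (T : finGroupType) := {ffun T * T -> int}.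
Definition chain3 (T : finGroupType) := {ffun T * T * T -> int}.

Definition bar_d2 (T : finGroupType) (c : chain2 T) : chain1 T :=
  [ffun x : T => (\sum_(gh : T * T)
     c gh * ((gh.2 == x)%:R - ((gh.1 * gh.2)%g == x)%:R + (gh.1 == x)%:R))%R].

Definition bar_d3 (T : finGroupType) (c : chain3 T) : chain2 T :=
  [ffun xy : T * T => (\sum_(t : T * T * T)
     c t * ((((t.1.2, t.2) == xy))%:R - ((((t.1.1 * t.1.2)%g, t.2) == xy))%:R
            + (((t.1.1, (t.1.2 * t.2)%g) == xy))%:R - (((t.1.1, t.1.2) == xy))%:R))%R].

Definition supp2 (T : finGroupType) (Q : {set T}) (c : chain2 T) : Prop :=
  forall gh : T * T, (c gh != 0)%R -> (gh.1 \in Q) && (gh.2 \in Q).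

Definition supp3 (T : finGroupType) (Q : {set T}) (c : chain3 T) : Prop :=
  forall t : T * T * T, (c t != 0)%R -> [&& t.1.1 \in Q, t.1.2 \in Q & t.2 \in Q].

Definition cycle2 (T : finGroupType) (Q : {set T}) (c : chain2 T) : Prop :=
  supp2 Q c /\ bar_d2 c = 0%R.

Definition boundary2 (T : finGroupType) (Q : {set T}) (c : chain2 T) : Prop :=
  exists b : chain3 T, supp3 Q b /\ bar_d3 b = c.

Definition p_primary_class (p : nat) (T : finGroupType) (Q : {set T}) (z : chain2 T)
  : Prop := exists k : nat, boundary2 Q (z *+ (p ^ k))%R.

Definition H2_p_part_trivial (p : nat) (T : finGroupType) (Q : {set T}) : Prop :=
  forall z : chain2 T, cycle2 Q z -> p_primary_class p Q z -> boundary2 Q z.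

Definition chain2_map (T T' : finGroupType) (f : T -> T') (c : chain2 T) : chain2 T' :=
  [ffun xy : T' * T' => (\sum_(gh : T * T | (f gh.1, f gh.2) == xy) c gh)%R].

Definition coinflation_p_surjective (p : nat) (gT : finGroupType)
  (G : {group gT}) (K : {set gT}) : Prop :=
  forall w : chain2 (coset_of K),
    cycle2 (G / K) w -> p_primary_class p (G / K) w ->
    exists z : chain2 gT,
      [/\ cycle2 G z, p_primary_class p G z &
          boundary2 (G / K) (chain2_map (coset K) z - w)%R].

(* A satisfies the Hypothesis with pi = {p}: for every n >= 1 the n-torsion
   {a | n a = 0} of A is cyclic of order n_p *)
Definition hypothesis_p (p : nat) (A : zmodType) : Prop :=
  forall n : nat, 0 < n ->
    exists a : A,
      (forall x : A, (x *+ n = 0)%R <-> exists k : nat, x = (a *+ k)%R) /\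
      (a *+ (n`_p) = 0)%R /\ (forall k : nat, 0 < k < n`_p -> (a *+ k != 0)%R).

Definition hom_on (gT : finGroupType) (A : zmodType) (D : {set gT}) (f : gT -> A) : Prop :=
  {in D &, forall x y, f (x * y) = (f x + f y)%R}.

Definition A_extensible (A : zmodType) (gT1 gT2 : finGroupType)
  (G : {group gT1}) (H : {group gT2}) (U : {group gT1 * gT2}) : Prop :=
  forall f : gT1 * gT2 -> A, hom_on U f ->
    exists F : gT1 * gT2 -> A, hom_on (setX G H) F /\ {in U, F =1 f}.

Definition p_extensible (p : nat) (gT1 gT2 : finGroupType)
  (G : {group gT1}) (H : {group gT2}) (U : {group gT1 * gT2}) : Prop :=
  forall A : zmodType, hypothesis_p p A -> A_extensible A G H U.

(* Main.v *)
Require Import Defs.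
From HB Require Import structures.
From mathcomp Require Import all_boot all_order all_algebra all_fingroup all_solvable.
Set Implicit Arguments. Unset Strict Implicit. Unset Printing Implicit Defensive.
From mathcomp Require Import ring zify.
Import GRing.Theory.
Section Div.
Variables (p : nat) (A : zmodType).
Hypothesis pr_p : prime p.
Hypothesis hA : hypothesis_p p A.
Local Open Scope ring_scope.

Lemma ord_dvd (g : A) (P : nat) : (0 < P)%N -> g *+ P = 0 ->
  (forall k : nat, (0 < k < P)%N -> g *+ k != 0) ->
  forall t : nat, g *+ t = 0 -> (P %| t)%N.
Proof.
move=> P0 gP gk t gt.
rewrite /dvdn; apply/negPn/negP => ne.
have: g *+ (t %% P) = 0.
  by move: gt; rewrite {1}(divn_eq t P) mulrnDr [(_ * P)%N]mulnC mulrnA gP mul0rn add0r.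
by apply/eqP; apply: gk; rewrite lt0n ne ltn_pmod.
Qed.

Lemma divisible (b : A) (N n : nat) : (0 < N)%N -> (0 < n)%N -> b *+ N = 0 ->
  exists a : A, a *+ n = b.
Proof.
move=> N0 n0 bN.
have Nn0 : (0 < N * n)%N by rewrite muln_gt0 N0.
have [g [tor [gP gk]]] := hA Nn0.
set P := ((N * n)`_p)%N in gP gk.
have P0 : (0 < P)%N by rewrite part_gt0.
have [k bk] : exists k : nat, b = g *+ k.
  by apply/tor; rewrite mulrnA bN mul0rn.
have PkN : (P %| k * N)%N.
  by apply: (ord_dvd P0 gP gk); rewrite mulrnA -bk.
set d := gcdn n P.
have dk : (d %| k)%N.
  have dP : (d %| P)%N by rewrite dvdn_gcdr.
  have dpn : p.-nat d by apply: pnat_dvd dP (part_pnat _ _).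
  have dnp : (d %| n`_p)%N.
    by rewrite -(part_pnat_id dpn) partn_dvd // dvdn_gcdl.
  have : ((N`_p * d) %| (N`_p * (k * N`_p^')))%N.
    rewrite mulnCA (partnC p N0).
    apply: (@dvdn_trans P) => //.
    by rewrite /P partnM // dvdn_pmul2l // part_gt0.
  rewrite dvdn_pmul2l ?part_gt0 //.
  rewrite Gauss_dvdl //; exact: (pnat_coprime dpn (part_pnat _ _)).
have [km kn e _] := egcdnP P n0.
have [q kq] := dvdnP dk.
exists (g *+ (km * q)); rewrite -mulrnA.
have -> : (km * q * n = P * (q * kn) + q * d)%N.
  by rewrite /d mulnAC e; ring.
rewrite mulrnDr [X in X + _]mulrnA gP mul0rn add0r bk kq //.
Qed.
End Div.
Section HomLemmas.
Variables (gT : finGroupType) (A : zmodType) (M : {group gT}) (th : gT -> A).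
Hypothesis hth : hom_on M th.
Local Open Scope ring_scope.

Lemma hom1 : th 1%g = 0.
Proof.
have := hth (group1 M) (group1 M).
by rewrite mulg1 -{1}[th 1%g]addr0 => /addrI /esym.
Qed.

Lemma homV x : x \in M -> th (x^-1)%g = - th x.
Proof.
move=> xM; apply/eqP; rewrite -subr_eq0 opprK.
by rewrite -hth ?groupV // mulVg hom1.
Qed.

Lemma homX x n : x \in M -> th (x ^+ n)%g = th x *+ n.
Proof.
move=> xM; elim: n => [|n IH]; first by rewrite expg0 hom1 mulr0n.
by rewrite expgS hth ?groupX // IH mulrS.
Qed.

Lemma hom_card x : x \in M -> th x *+ #|M| = 0.
Proof. by move=> xM; rewrite -homX // expg_cardG // hom1. Qed.

Lemma homM x y : x \in M -> y \in M -> th (x * y)%g = th x + th y.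
Proof. exact: hth. Qed.
End HomLemmas.

Section Extend.
Variables (p : nat) (A : zmodType) (gT : finGroupType) (G : {group gT}).
Hypothesis pr_p : prime p.
Hypothesis hA : hypothesis_p p A.
Local Open Scope ring_scope.
Local Open Scope group_scope.

Lemma ext_step (M : {group gT}) (th : gT -> A) x :
  M \subset G -> (G^`(1))%g \subset M -> hom_on M th ->
  {in (G^`(1))%g, forall c, th c = 0} -> x \in G ->
  exists th' : gT -> A, hom_on (M <*> <[x]>)%G th' /\ {in M, th' =1 th}.
Proof.
move=> sMG sGM hth th0 xG.
have nMG : (M <| G)%g := sub_der1_normal sGM sMG.
have nMG' : G \subset 'N(M) := normal_norm nMG.
have xN : x \in 'N(M) := subsetP nMG' x xG.
have thJ : forall m g, m \in M -> g \in G -> th (m ^ g)%g = th m.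
  move=> m g mM gG; rewrite conjg_mulR (homM hth) //; last first.
    by apply: (subsetP sGM); apply: mem_commg => //; exact: (subsetP sMG).
  by rewrite (th0 [~ m, g]) ?addr0 //; apply: mem_commg => //; exact: (subsetP sMG).
set n := #[coset M x].
have xtM : forall t, (x ^+ t \in M) = (n %| t)%N.
  move=> t; rewrite order_dvdn -morphX //=.
  apply/idP/idP => [h|/eqP h]; first by rewrite coset_id.
  by apply: coset_idr => //; rewrite groupX.
have n0 : (0 < n)%N by rewrite order_gt0.
have xnM : x ^+ n \in M by rewrite xtM.
have [a ha] := divisible hA (cardG_gt0 M) n0 (hom_card hth xnM).
have thx : forall t, x ^+ t \in M -> th (x ^+ t) = a *+ t.
  move=> t; rewrite xtM => /dvdnP [j ->].
  by rewrite mulnC expgM (homX hth) // -ha -mulrnA.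
have indep : forall y (i j : nat), (y * (x ^+ i)^-1)%g \in M ->
    (y * (x ^+ j)^-1)%g \in M ->
    th (y * (x ^+ i)^-1)%g + a *+ i = th (y * (x ^+ j)^-1)%g + a *+ j.
  move=> y i j.
  wlog le_ij : i j / (i <= j)%N.
    move=> W hi hj; case: (leqP i j) => [le|/ltnW le]; first exact: W.
    by symmetry; apply: W.
  have [d ->] : exists d, j = (d + i)%N by exists (j - i)%N; rewrite subnK.
  move=> hi hj.
  have e : (y * (x ^+ i)^-1 = (y * (x ^+ (d + i))^-1) * x ^+ d)%g.
    by rewrite expgD invMg !mulgA mulgKV.
  have xdM : x ^+ d \in M.
    have -> : (x ^+ d = (y * (x ^+ (d + i))^-1)^-1 * (y * (x ^+ i)^-1))%g.
      by rewrite e mulKg.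
    by rewrite groupM ?groupV.
  by rewrite e (homM hth) // thx // -addrA -mulrnDr addnC.
pose th' (y : gT) := if [pick i : 'I_#[x] | (y * (x ^+ i)^-1)%g \in M] is Some i
   then th (y * (x ^+ i)^-1)%g + a *+ i else 0.
have th'E : forall y (i : nat), (y * (x ^+ i)^-1)%g \in M ->
    th' y = th (y * (x ^+ i)^-1)%g + a *+ i.
  move=> y i hi; rewrite /th'; case: pickP => [j hj | none].
    exact: indep.
  have := none (Ordinal (ltn_pmod i (order_gt0 x))).
  by rewrite /= expg_mod_order hi.
have JE : (M <*> <[x]> = M * <[x]>)%g by rewrite norm_joinEr // cycle_subG.
have Jdec : forall y, y \in (M <*> <[x]>)%G -> exists i : nat, (y * (x ^+ i)^-1)%g \in M.
  move=> y; rewrite /= JE => /mulsgP [m z mM /cycleP [i ->] ->].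
  by exists i; rewrite mulgK.
exists th'; split; last first.
  by move=> y yM; rewrite (th'E y 0%N) ?expg0 ?invg1 ?mulg1 // addr0.
move=> y1 y2 /Jdec [i1 h1] /Jdec [i2 h2].
rewrite (th'E _ _ h1) (th'E _ _ h2).
set m1 := (y1 * (x ^+ i1)^-1)%g in h1 *; set m2 := (y2 * (x ^+ i2)^-1)%g in h2 *.
have e : (y1 * y2 * (x ^+ (i1 + i2))^-1 = m1 * m2 ^ (x ^+ i1)^-1)%g.
  by rewrite /m1 /m2 expgD invMg /conjg invgK !mulgA !mulgKV.
have m2J : (m2 ^ (x ^+ i1)^-1)%g \in M by rewrite memJ_norm // groupV groupX.
rewrite (th'E _ (i1 + i2)%N); last by rewrite e groupM.
rewrite e (homM hth) // thJ // ?groupV ?groupX // mulrnDr.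
by rewrite addrACA.
Qed.

Lemma ext_all (M : {group gT}) (th : gT -> A) :
  M \subset G -> (G^`(1))%g \subset M -> hom_on M th ->
  {in (G^`(1))%g, forall c, th c = 0} ->
  exists F : gT -> A, hom_on G F /\ {in M, F =1 th}.
Proof.
move: {2}(#|G| - #|M|)%N (leqnn (#|G| - #|M|)) => k.
elim: k M th => [|k IH] M th hk sMG sGM hth th0.
  have eMG : M :=: G.
    by apply/eqP; rewrite eqEcard sMG /=; move: hk; rewrite leqn0 subn_eq0.
  by exists th; split => //; rewrite -eMG.
case: (boolP (G \subset M)) => [sGM'|].
  have eMG : M :=: G by apply/eqP; rewrite eqEsubset sMG.
  by exists th; split => //; rewrite -eMG.
case/subsetPn => x xG xM.
have [th' [hth' th'E]] := ext_step sMG sGM hth th0 xG.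
set J := (M <*> <[x]>)%G in hth'.
have sMJ : M \subset J := joing_subl _ _.
have xJ : x \in J by apply: (subsetP (joing_subr _ _)); exact: cycle_id.
have sJG : J \subset G by rewrite /= join_subG sMG cycle_subG.
have ltMJ : (#|M| < #|J|)%N.
  by apply: proper_card; apply/properP; split => //; exists x.
have leJG : (#|J| <= #|G|)%N := subset_leq_card sJG.
have hk' : (#|G| - #|J| <= k)%N by lia.
have th'0 : {in (G^`(1))%g, forall c, th' c = 0}.
  by move=> c cG; rewrite th'E ?th0 // (subsetP sGM).
have [F [hF FE]] := IH J th' hk' sJG (subset_trans sGM sMJ) hth' th'0.
exists F; split => // y yM.
by rewrite FE ?th'E // (subsetP sMJ).
Qed.
End Extend.
Section Pairing.
Local Open Scope ring_scope.
Variables (T : finGroupType) (V : zmodType).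

Definition pair1 (c : chain1 T) (F : T -> V) := \sum_x F x *~ c x.
Definition pair2 (c : chain2 T) (F : T * T -> V) := \sum_x F x *~ c x.
Definition pair3 (c : chain3 T) (F : T * T * T -> V) := \sum_x F x *~ c x.

Lemma sum_delta (I : finType) (F : I -> V) (v : I) :
  \sum_i F i *~ ((v == i)%:R) = F v.
Proof.
rewrite (bigD1 v) //= eqxx mulr1z big1 ?addr0 // => i /negbTE.
by rewrite eq_sym => ->; rewrite mulr0z.
Qed.

Lemma pair1_d2 (z : chain2 T) (F : T -> V) :
  pair1 (bar_d2 z) F =
  pair2 z (fun gh => F gh.2 - F (gh.1 * gh.2)%g + F gh.1).
Proof.
rewrite /pair1 /pair2.
under eq_bigr => x _ do rewrite ffunE mulrz_sumr.
rewrite exchange_big /=; apply: eq_bigr => gh _.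
under eq_bigr => x _ do rewrite mulrC mulrzA.
rewrite -mulrz_suml; congr (_ *~ _).
under eq_bigr => x _ do rewrite !mulrzDr mulrNz.
by rewrite !big_split /= sumrN !sum_delta.
Qed.

Lemma pair2_d3 (b : chain3 T) (F : T * T -> V) :
  pair2 (bar_d3 b) F =
  pair3 b (fun t => F (t.1.2, t.2) - F ((t.1.1 * t.1.2)%g, t.2)
                    + F (t.1.1, (t.1.2 * t.2)%g) - F (t.1.1, t.1.2)).
Proof.
rewrite /pair2 /pair3.
under eq_bigr => x _ do rewrite ffunE mulrz_sumr.
rewrite exchange_big /=; apply: eq_bigr => t _.
under eq_bigr => x _ do rewrite mulrC mulrzA.
rewrite -mulrz_suml; congr (_ *~ _).
under eq_bigr => x _ do rewrite !mulrzDr !mulrNz.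
by rewrite !big_split /= !sumrN !sum_delta.
Qed.

End Pairing.

Section PairMap.
Local Open Scope ring_scope.
Lemma pair2_map (T T' : finGroupType) (V : zmodType) (f : T -> T') (z : chain2 T) (F : T' * T' -> V) :
  pair2 (chain2_map f z) F = pair2 z (fun gh => F (f gh.1, f gh.2)).
Proof.
rewrite /pair2.
under eq_bigr => x _ do rewrite ffunE mulrz_sumr.
rewrite (exchange_big_dep predT) //=; apply: eq_bigr => gh _.
by rewrite (big_pred1 (f gh.1, f gh.2)) // => xy /=; rewrite eq_sym.
Qed.
End PairMap.
Section Lin.
Local Open Scope ring_scope.
Variables (T : finGroupType) (V : zmodType).

Lemma ffDE (I : finType) (f g : {ffun I -> int}) x : (f + g) x = f x + g x.
Proof. by rewrite ffunE. Qed.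
Lemma ffNE (I : finType) (f : {ffun I -> int}) x : (- f) x = - f x.
Proof. by rewrite ffunE. Qed.
Lemma ff0E (I : finType) x : (0 : {ffun I -> int}) x = 0.
Proof. by rewrite ffunE. Qed.

Lemma pair2D (z1 z2 : chain2 T) (F : T * T -> V) :
  pair2 (z1 + z2) F = pair2 z1 F + pair2 z2 F.
Proof. by rewrite /pair2 -big_split; apply: eq_bigr => x _; rewrite ffDE mulrzDr. Qed.
Lemma pair2N (z : chain2 T) (F : T * T -> V) : pair2 (- z) F = - pair2 z F.
Proof. by rewrite /pair2 -sumrN; apply: eq_bigr => x _; rewrite ffNE mulrNz. Qed.
Lemma pair2B (z1 z2 : chain2 T) (F : T * T -> V) :
  pair2 (z1 - z2) F = pair2 z1 F - pair2 z2 F.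
Proof. by rewrite pair2D pair2N. Qed.
Lemma pair2Mn (z : chain2 T) n (F : T * T -> V) : pair2 (z *+ n) F = pair2 z F *+ n.
Proof.
by rewrite /pair2 -sumrMnl; apply: eq_bigr => x _; rewrite ffunMnE -mulr_natr mulrzA mulrz_nat.
Qed.

Lemma pair2_supp (Q : {set T}) (z : chain2 T) (F F' : T * T -> V) :
  supp2 Q z -> (forall gh : T * T, gh.1 \in Q -> gh.2 \in Q -> F gh = F' gh) ->
  pair2 z F = pair2 z F'.
Proof.
move=> sz eF; apply: eq_bigr => gh _.
case: (eqVneq (z gh) 0) => [->|/sz /andP [h1 h2]]; first by rewrite !mulr0z.
by rewrite eF.
Qed.

Lemma pair3_supp (Q : {set T}) (b : chain3 T) (F : T * T * T -> V) :
  supp3 Q b -> (forall t : T * T * T, t.1.1 \in Q -> t.1.2 \in Q -> t.2 \in Q -> F t = 0) ->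
  pair3 b F = 0.
Proof.
move=> sb eF; apply: big1 => t _.
case: (eqVneq (b t) 0) => [->|/sb /and3P [h1 h2 h3]]; first by rewrite mulr0z.
by rewrite eF // mul0rz.
Qed.

Lemma pair1_delta (c : chain1 T) x : pair1 c (fun y => ((x == y)%:R : int)) = c x.
Proof.
rewrite /pair1 (bigD1 x) //= eqxx big1 ?addr0 ?mulrzz ?mul1r // => y.
by rewrite eq_sym => /negbTE ->; rewrite mulrzz mul0r.
Qed.

Lemma pair2_delta (c : chain2 T) x : pair2 c (fun y => ((x == y)%:R : int)) = c x.
Proof.
rewrite /pair2 (bigD1 x) //= eqxx big1 ?addr0 ?mulrzz ?mul1r // => y.
by rewrite eq_sym => /negbTE ->; rewrite mulrzz mul0r.
Qed.

Lemma chain1P (c1 c2 : chain1 T) :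
  (forall x, pair1 c1 (fun y => ((x == y)%:R : int)) = pair1 c2 (fun y => ((x == y)%:R : int))) -> c1 = c2.
Proof. by move=> h; apply/ffunP => x; rewrite -!pair1_delta h. Qed.

Lemma chain2P (c1 c2 : chain2 T) :
  (forall x, pair2 c1 (fun y => ((x == y)%:R : int)) = pair2 c2 (fun y => ((x == y)%:R : int))) -> c1 = c2.
Proof. by move=> h; apply/ffunP => x; rewrite -!pair2_delta h. Qed.
End Lin.
Section Bd.
Variables (gT : finGroupType) (G : {group gT}).
Local Open Scope ring_scope.
Local Open Scope group_scope.

Definition delta1 (x : gT) : chain1 gT := [ffun y => ((x == y)%:R : int)].
Definition delta2 (v : gT * gT) : chain2 gT := [ffun y => ((v == y)%:R : int)].

Lemma sum_delta_int (I : finType) (F : I -> int) (v : I) :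
  \sum_i ((v == i)%:R * F i) = F v.
Proof.
rewrite -[RHS](sum_delta F v); apply: eq_bigr => i _.
by rewrite mulrzz mulrC.
Qed.

Lemma d2_delta v : bar_d2 (delta2 v) = delta1 v.2 - delta1 (v.1 * v.2)%g + delta1 v.1.
Proof.
apply/ffunP => x; rewrite !ffunE.
under eq_bigr => gh _ do rewrite ffunE.
by rewrite sum_delta_int ?ffunE.
Qed.

Lemma d2D (z1 z2 : chain2 gT) : bar_d2 (z1 + z2) = bar_d2 z1 + bar_d2 z2.
Proof.
apply/ffunP => x; rewrite !ffunE -big_split; apply: eq_bigr => gh _.
by rewrite ffunE mulrDl.
Qed.

Lemma d2N (z : chain2 gT) : bar_d2 (- z) = - bar_d2 z.
Proof.
apply/ffunP => x; rewrite !ffunE -sumrN; apply: eq_bigr => gh _.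
by rewrite ffunE mulNr.
Qed.

Lemma d2B (z1 z2 : chain2 gT) : bar_d2 (z1 - z2) = bar_d2 z1 - bar_d2 z2.
Proof. by rewrite d2D d2N. Qed.

Lemma d2Mn (z : chain2 gT) n : bar_d2 (z *+ n) = bar_d2 z *+ n.
Proof.
elim: n => [|n IH]; last by rewrite !mulrS d2D IH.
apply/ffunP => x; rewrite !ffunE big1 // => gh _; by rewrite ffunE mul0r.
Qed.

Lemma d3Mn (b : chain3 gT) n : bar_d3 (b *+ n) = bar_d3 b *+ n.
Proof.
elim: n => [|n IH].
  apply/ffunP => x; rewrite !ffunE big1 // => gh _; by rewrite ffunE mul0r.
rewrite !mulrS -IH; apply/ffunP => x; rewrite !ffunE -big_split; apply: eq_bigr => t _.
by rewrite ffunE mulrDl.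
Qed.

Definition Bd (c : chain1 gT) := exists z, supp2 G z /\ bar_d2 z = c.

Lemma Bd0 : Bd 0.
Proof.
exists 0; split; first by move=> gh; rewrite ffunE eqxx.
apply/ffunP => x; rewrite !ffunE big1 // => gh _; by rewrite ffunE mul0r.
Qed.

Lemma supp2D (z1 z2 : chain2 gT) : supp2 G z1 -> supp2 G z2 -> supp2 G (z1 + z2).
Proof.
move=> s1 s2 gh; rewrite ffunE.
case: (eqVneq (z1 gh) 0) => [->|/s1 //]; rewrite add0r; exact: s2.
Qed.

Lemma supp2N (z : chain2 gT) : supp2 G z -> supp2 G (- z).
Proof. by move=> s gh; rewrite ffunE oppr_eq0; exact: s. Qed.

Lemma supp2Mn (z : chain2 gT) n : supp2 G z -> supp2 G (z *+ n).
Proof.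
move=> s gh; rewrite ffunMnE; case: (eqVneq (z gh) 0) => [->|/s //].
by rewrite mul0rn eqxx.
Qed.

Lemma supp2_delta v : v.1 \in G -> v.2 \in G -> supp2 G (delta2 v).
Proof.
move=> h1 h2 gh; rewrite ffunE; case: (eqVneq v gh) => [<-|]; first by rewrite h1 h2.
by rewrite eqxx.
Qed.

Lemma BdD c1 c2 : Bd c1 -> Bd c2 -> Bd (c1 + c2).
Proof.
move=> [z1 [s1 e1]] [z2 [s2 e2]]; exists (z1 + z2); split; first exact: supp2D.
by rewrite d2D e1 e2.
Qed.

Lemma BdN c : Bd c -> Bd (- c).
Proof.
move=> [z [s e]]; exists (- z); split; first exact: supp2N.
by rewrite d2N e.
Qed.

Lemma BdB c1 c2 : Bd c1 -> Bd c2 -> Bd (c1 - c2).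
Proof. by move=> h1 h2; apply: BdD h1 (BdN h2). Qed.

Lemma Bdr u v : u \in G -> v \in G -> Bd (delta1 u + delta1 v - delta1 (u * v)%g).
Proof.
move=> uG vG; exists (delta2 (u, v)); split; first exact: supp2_delta.
rewrite d2_delta /=.
by rewrite addrC addrA.
Qed.

Lemma zid1 (V : zmodType) (u v w c d : V) :
  (u - c + (v - d)) - (u + v - w) = w - (c + d).
Proof.
by rewrite opprB [u - c + _]addrACA -opprD [LHS]addrC addrA subrK.
Qed.

Lemma BdM' u v c d : u \in G -> v \in G ->
  Bd (delta1 u - c) -> Bd (delta1 v - d) -> Bd (delta1 (u * v)%g - (c + d)).
Proof.
move=> uG vG h1 h2; rewrite -(zid1 (delta1 u) (delta1 v)); apply: BdB (BdD h1 h2) (Bdr uG vG).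
Qed.

Lemma Bd1 : Bd (delta1 1%g).
Proof.
have := Bdr (group1 G) (group1 G); by rewrite mulg1 addrK.
Qed.

Lemma BdM u v : u \in G -> v \in G -> Bd (delta1 u) -> Bd (delta1 v) -> Bd (delta1 (u * v)%g).
Proof.
move=> uG vG h1 h2.
have := BdM' (c := 0) (d := 0) uG vG; rewrite !subr0 addr0 subr0; by apply.
Qed.

Lemma BdV u : u \in G -> Bd (delta1 u + delta1 u^-1%g).
Proof.
move=> uG; have := BdD (Bdr uG (groupVr uG)) Bd1.
by rewrite mulgV subrK.
Qed.

Lemma Bd_comm x y : x \in G -> y \in G -> Bd (delta1 [~ x, y]).
Proof.
move=> xG yG.
have h0 : forall u, Bd (delta1 u - delta1 u) by move=> u; rewrite subrr; exact: Bd0.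
have e : [~ x, y] = (x^-1 * y^-1 * x * y)%g by rewrite commgEl /conjg !mulgA.
have h := BdM' (groupM (groupM (groupVr xG) (groupVr yG)) xG) yG
  (BdM' (groupM (groupVr xG) (groupVr yG)) xG
     (BdM' (groupVr xG) (groupVr yG) (h0 _) (h0 _)) (h0 _)) (h0 _).
rewrite -e in h.
have := BdD h (BdD (BdV xG) (BdV yG)).
have -> : delta1 x + delta1 x^-1 + (delta1 y + delta1 y^-1) =
   delta1 x^-1 + delta1 y^-1 + delta1 x + delta1 y.
  by rewrite addrACA addrC addrA.
by rewrite subrK.
Qed.

Lemma Bd_der k : k \in (G^`(1))%g -> Bd (delta1 k).
Proof.
rewrite derg1 => /gen_prodgP [n [c cG ->]].
elim: n c cG => [|n IH] c cG; first by rewrite big_ord0; exact: Bd1.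
have cG' : forall i : 'I_n.+1, c i \in G.
  move=> i; case/imset2P: (cG i) => x y xG yG ->; exact: groupR.
rewrite big_ord_recr /=; apply: BdM.
- by apply: group_prod => i _; exact: cG'.
- exact: cG'.
- by apply: IH => i; exact: cG.
- by case/imset2P: (cG ord_max) => x y xG yG ->; exact: Bd_comm.
Qed.
End Bd.
Section Transgression.
Variables (gT : finGroupType) (A : zmodType) (G K : {group gT}) (phi : gT -> A).
Hypothesis nKG : (K <| G)%g.
Hypothesis hphi : hom_on K phi.
Hypothesis phiJ : forall k g, k \in K -> g \in G -> phi (k ^ g)%g = phi k.
Local Open Scope ring_scope.
Local Open Scope group_scope.

Lemma zid2 (x y z w : A) : x - y + z - w = (x + z) - (w + y).
Proof. by rewrite opprD addrA [x - y + z]addrAC [RHS]addrAC. Qed.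

Lemma zid3 (x y z : A) : z = (x + y + z) - x - y.
Proof. by rewrite -[x + y + z]addrA [x + (y + z)]addrC addrK addrC addKr. Qed.

Let s (a : coset_of K) : gT := repr a.

Lemma sN a : s a \in 'N(K). Proof. exact: repr_coset_norm. Qed.

Lemma cosM x y : x \in 'N(K) -> y \in 'N(K) -> coset K (x * y) = coset K x * coset K y.
Proof. exact: coset_morphM. Qed.

Lemma cosV x : x \in 'N(K) -> coset K x^-1 = (coset K x)^-1.
Proof.
move=> xN; apply/eqP; rewrite eq_sym eq_invg_mul -cosM ?groupV // mulgV.
by rewrite coset_id.
Qed.

Lemma sG a : a \in G / K -> s a \in G.
Proof.
move=> aQ; rewrite -(quotientGK nKG); apply/morphpreP; split; first exact: sN.
by rewrite /= /s coset_reprK.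
Qed.

Definition kf (a b : coset_of K) : gT := s a * s b * (s (a * b))^-1.

Lemma kfK a b : kf a b \in K.
Proof.
have N1 := sN a; have N2 := sN b; have N3 := sN (a * b).
apply: coset_idr; first by rewrite /kf !groupM ?groupV.
by rewrite /kf !cosM ?groupM ?groupV // cosV // /s !coset_reprK mulgV.
Qed.

Definition cc (ab : coset_of K * coset_of K) : A := phi (kf ab.1 ab.2).

Lemma cocycle a b d : a \in G / K ->
  cc (b, d) - cc (a * b, d) + cc (a, b * d) - cc (a, b) = 0.
Proof.
move=> aQ.
have e : kf a b * kf (a * b) d = (kf b d) ^ (s a)^-1 * kf a (b * d).
  by rewrite /kf /conjg invgK !mulgA !mulgKV.
have := congr1 phi e.
have hJ : kf b d ^ (s a)^-1 \in K by rewrite memJ_norm ?groupV ?sN ?kfK.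
rewrite (homM hphi (kfK a b) (kfK (a * b) d)) (homM hphi hJ (kfK a (b * d))).
rewrite (phiJ (kfK b d) (groupVr (sG aQ))).
by rewrite /cc /= => E; rewrite zid2 E subrr.
Qed.

Lemma T_d3 (b : chain3 (coset_of K)) : supp3 (G / K) b -> pair2 (bar_d3 b) cc = 0.
Proof.
move=> sb; rewrite pair2_d3; apply: (pair3_supp sb) => t h1 h2 h3.
by rewrite /= cocycle.
Qed.

Definition psi (g : gT) : A := phi (g * (s (coset K g))^-1).

Lemma kapK g : g \in 'N(K) -> g * (s (coset K g))^-1 \in K.
Proof.
move=> gN; apply: coset_idr; first by rewrite groupM ?groupV ?sN.
by rewrite cosM ?groupV ?sN // cosV ?sN // /s coset_reprK mulgV.
Qed.

Lemma c_psi g h : g \in G -> h \in G ->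
  cc (coset K g, coset K h) = psi (g * h) - psi g - psi h.
Proof.
move=> gG hG.
have sGN := subsetP (normal_norm nKG).
have gN := sGN g gG; have hN := sGN h hG.
set a := coset K g; set b := coset K h.
have aQ : a \in G / K by apply: mem_quotient.
have e : g * h * (s (coset K (g * h)))^-1 =
   (g * (s a)^-1) * ((h * (s b)^-1) ^ (s a)^-1) * kf a b.
  by rewrite cosM // /kf /conjg invgK !mulgA !mulgKV.
have hkg : g * (s a)^-1 \in K by apply: kapK.
have hkh : h * (s b)^-1 \in K by apply: kapK.
have hkh' : (h * (s b)^-1) ^ (s a)^-1 \in K by rewrite memJ_norm ?groupV ?sN.
rewrite /psi e (homM hphi (groupM hkg hkh') (kfK a b)) (homM hphi hkg hkh').
rewrite (phiJ hkh (groupVr (sG aQ))) /cc /= -/a -/b.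
exact: zid3.
Qed.

Lemma pair2_oppF (T : finGroupType) (z : chain2 T) (F : T * T -> A) :
  pair2 z (fun x => - F x) = - pair2 z F.
Proof. by rewrite /pair2 -sumrN; apply: eq_bigr => x _; rewrite mulNrz. Qed.

Lemma T_map (z : chain2 gT) : supp2 G z ->
  pair2 (chain2_map (coset K) z) cc = - pair1 (bar_d2 z) psi.
Proof.
move=> sz; rewrite pair2_map pair1_d2 -pair2_oppF.
apply: (pair2_supp sz) => gh h1 h2.
by rewrite c_psi // opprD opprB addrAC.
Qed.
End Transgression.
Section PairF.
Local Open Scope ring_scope.
Variables (T : finGroupType) (V : zmodType).

Lemma pair2_ext (z : chain2 T) (F F' : T * T -> V) :
  (forall x, F x = F' x) -> pair2 z F = pair2 z F'.
Proof. by move=> e; rewrite /pair2; apply: eq_bigr => x _; rewrite e. Qed.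

Lemma pair2_addF (z : chain2 T) (F F' : T * T -> V) :
  pair2 z (fun x => F x + F' x) = pair2 z F + pair2 z F'.
Proof. by rewrite /pair2; under eq_bigr => x _ do rewrite mulrzDl; rewrite big_split. Qed.

Lemma pair2_subF (z : chain2 T) (F F' : T * T -> V) :
  pair2 z (fun x => F x - F' x) = pair2 z F - pair2 z F'.
Proof. by rewrite /pair2; under eq_bigr => x _ do rewrite mulrzBl; rewrite sumrB. Qed.

Lemma pair2_MnF (z : chain2 T) (F : T * T -> V) n :
  pair2 z (fun x => F x *+ n) = pair2 z F *+ n.
Proof.
rewrite /pair2; under eq_bigr => x _ do rewrite -mulrz_nat -mulrzA mulrC mulrzA mulrz_nat.
by rewrite sumrMnl.
Qed.

Lemma pair2_sumF (I : finType) (P : pred I) (z : chain2 T) (F : I -> T * T -> V) :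
  pair2 z (fun ab => \sum_(i | P i) F i ab) = \sum_(i | P i) pair2 z (F i).
Proof.
rewrite /pair2; under eq_bigr => x _ do rewrite mulrz_suml.
by rewrite exchange_big.
Qed.

Lemma pair1_0 (F : T -> V) : pair1 0 F = 0.
Proof. by rewrite /pair1; apply: big1 => x _; rewrite ffunE mulr0z. Qed.

Lemma pair1_dk (k : T) (F : T -> V) :
  pair1 (delta1 k - delta1 1%g) F = F k - F 1%g.
Proof.
rewrite /pair1; under eq_bigr => x _ do rewrite !ffunE mulrzBr.
by rewrite sumrB !sum_delta.
Qed.
End PairF.

Section PairMul.
Local Open Scope ring_scope.
Lemma pair2_mulF (T : finGroupType) (z : chain2 T) (F : T * T -> int) (c : int) :
  pair2 z (fun x => c * F x) = c * pair2 z F.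
Proof.
rewrite /pair2 mulr_sumr; apply: eq_bigr => x _.
by rewrite !mulrzz mulrA.
Qed.
End PairMul.
Section BoundCard.
Variables (T : finGroupType) (Q : {group T}).
Local Open Scope ring_scope.
Local Open Scope group_scope.

Lemma sumQ2 (x : T) (c : bool) :
  \sum_(g in Q) (((x == g) && c)%:R : int) = ((x \in Q) && c)%:R.
Proof.
case: c; last by rewrite andbF big1 // => g _; rewrite andbF.
under eq_bigr => g _ do rewrite andbT.
rewrite andbT big_mkcond (bigD1 x) //= big1 ?addr0 => [|g ngx].
  by case: (x \in Q); rewrite ?eqxx.
by rewrite eq_sym (negbTE ngx); case: ifP.
Qed.

Lemma sumQ1 (x a : T) (c : bool) : a \in Q ->
  \sum_(g in Q) (((x == (g * a)%g) && c)%:R : int) = ((x \in Q) && c)%:R.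
Proof.
move=> aQ.
have e : forall g, (x == (g * a)%g) = (x * a^-1 == g).
  by move=> g; apply/eqP/eqP => [->|<-]; rewrite ?mulgK ?mulgKV.
under eq_bigr => g _ do rewrite e.
by rewrite sumQ2 groupMr ?groupV.
Qed.

Lemma sumQ2p (x y v : T) :
  \sum_(g in Q) (((x, y) == (g, v))%:R : int) = ((x \in Q) && (y == v))%:R.
Proof. by under eq_bigr => g _ do rewrite xpair_eqE; rewrite sumQ2. Qed.

Lemma sumQ1p (x y a v : T) : a \in Q ->
  \sum_(g in Q) (((x, y) == ((g * a)%g, v))%:R : int) = ((x \in Q) && (y == v))%:R.
Proof. by move=> aQ; under eq_bigr => g _ do rewrite xpair_eqE; rewrite sumQ1. Qed.

Definition bnd (w : chain2 T) : chain3 T :=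
  [ffun t : T * T * T => if t.1.1 \in Q then w (t.1.2, t.2) else 0].

Lemma pair3_split (V : zmodType) (w : chain2 T) (F : T * T * T -> V) :
  pair3 (bnd w) F = \sum_(g in Q) pair2 w (fun ab => F ((g, ab.1), ab.2)).
Proof.
rewrite /pair3.
transitivity (\sum_(gh : T * T) \sum_(u : T) F (gh, u) *~ bnd w (gh, u)).
  by rewrite [RHS]pair_bigA; apply: eq_bigr => [[gh u]] _.
transitivity (\sum_(g : T) \sum_(a : T) \sum_(u : T) F ((g, a), u) *~ bnd w ((g, a), u)).
  by rewrite [RHS]pair_bigA; apply: eq_bigr => [[g a]] _.
rewrite [RHS]big_mkcond; apply: eq_bigr => g _.
rewrite /pair2; case: ifP => gQ.
  rewrite [LHS]pair_bigA; apply: eq_bigr => [[a u]] _ /=.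
  by rewrite ffunE /= gQ.
by rewrite big1 // => a _; rewrite big1 // => u _; rewrite ffunE /= gQ mulr0z.
Qed.

Lemma bound_card (w : chain2 T) : cycle2 Q w -> boundary2 Q (w *+ #|Q|).
Proof.
move=> [sw dw]; exists (bnd w); split.
  move=> t; rewrite ffunE; case: ifP => [tQ /sw /andP [h1 h2]|]; last by rewrite eqxx.
  by apply/and3P; split.
apply: chain2P => [[x y]].
rewrite pair2_d3 pair3_split pair2Mn pair2_delta /=.
rewrite -pair2_sumF.
rewrite (pair2_supp (F' := fun ab => ((x, y) == ab)%:R *+ #|Q| -
    (x \in Q)%:R * ((y == ab.2)%:R - (y == ab.1 * ab.2)%:R + (y == ab.1)%:R)) sw); last first.
  move=> [a b] /= aQ bQ.
  rewrite sumrB big_split sumrB /= sumr_const.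
  rewrite sumQ1p // !sumQ2p -!mulnb !natrM.
  set K := (_ *+ #|Q|); set q := ((x \in Q)%:R : int).
  set B := ((y == b)%:R : int); set C := ((y == _)%:R : int); set D := ((y == a)%:R : int).
  ring.
rewrite pair2_subF pair2_MnF pair2_delta pair2_mulF.
have := pair1_d2 w (fun u => ((y == u)%:R : int)).
rewrite dw pair1_0 /= => <-.
by rewrite mulr0 subr0.
Qed.
End BoundCard.
Section MainLemma.
Variables (p : nat) (A : zmodType) (gT : finGroupType) (G K : {group gT}) (phi : gT -> A).
Hypothesis pr_p : prime p.
Hypothesis hA : hypothesis_p p A.
Hypothesis nKG : (K <| G)%g.
Hypothesis hphi : hom_on K phi.
Hypothesis phiJ : forall k g, k \in K -> g \in G -> phi (k ^ g)%g = phi k.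
Hypothesis hyp : H2_p_part_trivial p (G / K)%g \/ coinflation_p_surjective p G K.
Local Open Scope ring_scope.
Local Open Scope group_scope.

Lemma map_supp (z : chain2 gT) : supp2 G z -> supp2 (G / K) (chain2_map (coset K) z).
Proof.
move=> sz xy; apply: contraR => hxy; rewrite ffunE; apply/eqP; apply: big1 => gh /eqP e.
apply/eqP/negPn/negP => /sz /andP [g1 g2]; case/negP: hxy.
by rewrite -e /= !mem_quotient.
Qed.

Lemma map_d2 (z : chain2 gT) k : supp2 G z -> k \in K ->
  bar_d2 z = delta1 k - delta1 1 -> bar_d2 (chain2_map (coset K) z) = 0.
Proof.
move=> sz kK dz; apply: chain1P => xb.
rewrite pair1_0 pair1_d2 pair2_map.
have sGN := subsetP (normal_norm nKG).
rewrite (pair2_supp (F' := fun gh => ((xb == coset K gh.2)%:R : int) -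
    (xb == coset K (gh.1 * gh.2))%:R + (xb == coset K gh.1)%:R) sz); last first.
  by move=> gh h1 h2 /=; rewrite cosM ?sGN.
rewrite -(pair1_d2 z (fun y => ((xb == coset K y)%:R : int))) dz pair1_dk.
by rewrite coset_id // coset_id // subrr.
Qed.

Lemma kill_coprime (x : A) m n : (0 < m)%N -> coprime m n -> x *+ m = 0 -> x *+ n = 0 -> x = 0.
Proof.
move=> m0 co xm xn.
have [km kn e _] := egcdnP n m0.
move: co; rewrite /coprime => /eqP g1; rewrite g1 in e.
have : x *+ (km * m) = x *+ (kn * n + 1).
  by rewrite e.
by rewrite mulrnDr [(km * m)%N]mulnC [(kn * n)%N]mulnC !mulrnA xm xn !mul0rn add0r mulr1n => <-.
Qed.

Lemma ptors (x : A) N : (0 < N)%N -> x *+ N = 0 -> x *+ (N`_p)%N = 0.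
Proof.
move=> N0 xN; have [a [tor [aP _]]] := hA N0.
have [j ->] := (proj1 (tor x)) xN.
by rewrite -mulrnA mulnC mulrnA aP mul0rn.
Qed.

Lemma phi_der k : k \in K -> k \in (G^`(1))%g -> phi k = 0.
Proof.
move=> kK kD.
have sKG := normal_sub nKG.
have [z0 [s0 d0]] := Bd_der kD.
pose z := z0 - delta2 (1, 1).
have sz : supp2 G z.
  by apply: supp2D s0 (supp2N (supp2_delta _ _)); rewrite /= group1.
have dz : bar_d2 z = delta1 k - delta1 1.
  by rewrite d2B d0 d2_delta /= mulg1 subrr add0r.
pose w := chain2_map (coset K) z.
have cw : cycle2 (G / K) w by split; [exact: map_supp | exact: map_d2 sz kK dz].
have Tw : pair2 w (cc phi) = - phi k.
  rewrite (T_map nKG hphi phiJ sz) dz pair1_dk /psi.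
  rewrite coset_id // -[coset K 1]/(coset_morphism K 1) morph1 repr_coset1.
  by rewrite invg1 !mulg1 (hom1 hphi) subr0.
pose q' := (#|G / K|`_p^')%N.
pose w1 := w *+ q'.
have cw1 : cycle2 (G / K) w1.
  by case: cw => s d; split; [exact: supp2Mn | rewrite d2Mn d mul0rn].
have pw1 : p_primary_class p (G / K) w1.
  exists (logn p #|G / K|); rewrite -mulrnA -p_part mulnC partnC ?cardG_gt0 //.
  exact: bound_card.
have T1 : pair2 w1 (cc phi) = 0.
  case: hyp => [h|h].
    by have [b [sb <-]] := h w1 cw1 pw1; exact: (T_d3 nKG hphi phiJ).
  have [z' [[sz' dz'] _ [b [sb db]]]] := h w1 cw1 pw1.
  have := T_d3 nKG hphi phiJ sb; rewrite db pair2B.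
  by rewrite (T_map nKG hphi phiJ sz') dz' pair1_0 oppr0 sub0r => /eqP; rewrite oppr_eq0 => /eqP.
have e1 : phi k *+ q' = 0.
  by apply/eqP; rewrite -oppr_eq0 -mulNrn -Tw -pair2Mn T1.
have e2 : phi k *+ (#|K|`_p)%N = 0 by apply: ptors; [exact: cardG_gt0 | exact: hom_card].
apply: kill_coprime (part_gt0 p #|K|) _ e2 e1.
exact: pnat_coprime (part_pnat _ _) (part_pnat _ _).
Qed.
End MainLemma.
Lemma pairM (gT1 gT2 : finGroupType) (a b : gT1) (c d : gT2) :
  ((a, c) * (b, d))%g = ((a * b)%g, (c * d)%g).
Proof. by []. Qed.
Lemma pairV (gT1 gT2 : finGroupType) (a : gT1) (c : gT2) :
  ((a, c)^-1)%g = ((a^-1)%g, (c^-1)%g).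
Proof. by []. Qed.
Lemma pairJ (gT1 gT2 : finGroupType) (a b : gT1) (c d : gT2) :
  ((a, c) ^ (b, d))%g = ((a ^ b)%g, (c ^ d)%g).
Proof. by []. Qed.

Section Final.
Variables (gT1 gT2 : finGroupType) (U : {group gT1 * gT2}).

Lemma k1_gs : group_set (k1 U).
Proof.
apply/group_setP; split; first by rewrite inE group1.
move=> x y; rewrite !inE => hx hy.
have -> : ((x * y)%g, (1%g : gT2)) = ((x, (1%g : gT2)) * (y, (1%g : gT2)))%g by rewrite pairM mulg1.
exact: groupM.
Qed.
Canonical k1G := group k1_gs.
End Final.

Lemma hom_conj (gT : finGroupType) (A : zmodType) (M : {group gT}) (th : gT -> A) u v :
  hom_on M th -> u \in M -> v \in M -> th (u ^ v)%g = th u.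
Proof.
move=> hth uM vM; rewrite /conjg !(homM hth) ?groupM ?groupV // (homV hth) //.
by rewrite addrC addrK.
Qed.

Section Assembly.
Variables (p : nat) (gT1 gT2 : finGroupType) (G : {group gT1}) (H : {group gT2})
  (U : {group gT1 * gT2}) (A : zmodType).
Hypothesis pr_p : prime p.
Hypothesis sUGH : U \subset setX G H.
Hypothesis fU : fst @: U = G.
Hypothesis sU : snd @: U = H.
Hypothesis hyp : H2_p_part_trivial p (G / k1 U)%g \/ coinflation_p_surjective p G (k1 U).
Hypothesis hA : hypothesis_p p A.
Variable f : gT1 * gT2 -> A.
Hypothesis hf : hom_on U f.
Local Open Scope ring_scope.
Local Open Scope group_scope.

Let K := k1G U.

Lemma inK k : (k \in K) = ((k, 1) \in U).
Proof. by rewrite inE. Qed.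

Lemma UG u : u \in U -> (u.1 \in G) && (u.2 \in H).
Proof. by move=> uU; have := subsetP sUGH u uU; rewrite inE. Qed.

Lemma liftG g : g \in G -> exists h, (g, h) \in U.
Proof.
by rewrite -fU => /imsetP [u uU ->]; exists u.2; case: u uU.
Qed.

Lemma liftH h : h \in H -> exists g, (g, h) \in U.
Proof.
by rewrite -sU => /imsetP [u uU ->]; exists u.1; case: u uU.
Qed.

Lemma sKG : K \subset G.
Proof. by apply/subsetP => k; rewrite inK => /UG /andP []. Qed.

Lemma KJ k g : k \in K -> g \in G -> k ^ g \in K.
Proof.
move=> kK gG; have [h gh] := liftG gG.
rewrite inK; have -> : (k ^ g, (1%g : gT2)) = (k, (1%g : gT2)) ^ (g, h) by rewrite pairJ conj1g.
by rewrite groupJ // -inK.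
Qed.

Lemma nKG : K <| G.
Proof.
apply/andP; split; first exact: sKG.
apply/subsetP => g gG; rewrite inE; apply/subsetP => _ /imsetP [k kK ->].
exact: KJ.
Qed.

Definition phi (k : gT1) : A := f (k, 1).

Lemma hphi : hom_on K phi.
Proof.
move=> x y; rewrite !inK => hx hy; rewrite /phi.
have -> : (x * y, (1%g : gT2)) = (x, (1%g : gT2)) * (y, 1) by rewrite pairM mulg1.
exact: hf.
Qed.

Lemma phiJ k g : k \in K -> g \in G -> phi (k ^ g) = phi k.
Proof.
move=> kK gG; have [h gh] := liftG gG.
rewrite /phi; have -> : (k ^ g, (1%g : gT2)) = (k, (1%g : gT2)) ^ (g, h) by rewrite pairJ conj1g.
by apply: (hom_conj hf) => //; rewrite -inK.
Qed.

Lemma phiD k : k \in K -> k \in (G^`(1))%g -> phi k = 0.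
Proof.
exact: (phi_der hA nKG hphi phiJ hyp).
Qed.

Lemma F1_exists : exists F1 : gT1 -> A, hom_on G F1 /\ {in K, F1 =1 phi}.
Proof.
set D := (G^`(1))%g.
have sDG : D \subset G := der_sub 1 G.
have nDG : G \subset 'N(D) := der_norm 1 G.
have nKG' : G \subset 'N(K) := normal_norm nKG.
pose th0 (y : gT1) := if [pick k in K | k^-1 * y \in D] is Some k then phi k else 0.
have th0E : forall y k, k \in K -> k^-1 * y \in D -> th0 y = phi k.
  move=> y k kK kyD; rewrite /th0; case: pickP => [k' /andP [k'K k'yD] | none].
    have e : k = k' * (k'^-1 * k) by rewrite mulKVg.
    have hK : k'^-1 * k \in K by rewrite groupM ?groupV.
    have hD : k'^-1 * k \in D.
      have -> : k'^-1 * k = (k'^-1 * y) * (k^-1 * y)^-1 by rewrite invMg invgK !mulgA mulgK.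
      by rewrite groupM ?groupV.
    by rewrite {1}e (hphi k'K hK) (phiD hK hD) addr0.
  by have := none k; rewrite kK kyD.
have JE : (K <*> D) = K * D.
  by rewrite norm_joinEr //; apply: subset_trans sDG nKG'.
have Jdec : forall y, y \in (K <*> D)%G -> exists2 k, k \in K & k^-1 * y \in D.
  move=> y; rewrite /= JE => /mulsgP [k c kK cD ->].
  by exists k => //; rewrite mulKg.
have hth0 : hom_on (K <*> D)%G th0.
  move=> y1 y2 /Jdec [k1 k1K c1D] /Jdec [k2 k2K c2D].
  rewrite (th0E _ _ k1K c1D) (th0E _ _ k2K c2D) (th0E _ (k1 * k2)).
  - exact: hphi.
  - by rewrite groupM.
  have -> : (k1 * k2)^-1 * (y1 * y2) = (k1^-1 * y1) ^ k2 * (k2^-1 * y2).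
    by rewrite /conjg invMg !mulgA mulgK.
  rewrite groupM // memJ_norm //; apply: (subsetP nDG); exact: (subsetP sKG).
have th00 : {in D, forall c, th0 c = 0}.
  move=> c cD; rewrite (th0E c 1) ?group1 ?invg1 ?mul1g //.
  by rewrite /phi (hom1 hf).
have sJG : (K <*> D)%G \subset G by rewrite /= join_subG sKG sDG.
have [F [hF FE]] := ext_all pr_p hA sJG (joing_subr _ _) hth0 th00.
exists F; split => // k kK.
rewrite FE; last by apply: (subsetP (joing_subl _ _)).
by rewrite (th0E k k) // mulVg group1.
Qed.

Lemma extend : exists F : gT1 * gT2 -> A, hom_on (setX G H) F /\ {in U, F =1 f}.
Proof.
have [F1 [hF1 F1E]] := F1_exists.
pose F2 (h : gT2) := if [pick g | (g, h) \in U] is Some g then f (g, h) - F1 g else 0.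
have F2E : forall g h, (g, h) \in U -> F2 h = f (g, h) - F1 g.
  move=> g h ghU; rewrite /F2; case: pickP => [g' g'U | none]; last by have := none g; rewrite ghU.
  have kK : g * g'^-1 \in K.
    rewrite inK; have -> : (g * g'^-1, (1%g : gT2)) = (g, h) * (g', h)^-1 by rewrite pairV pairM mulgV.
    by rewrite groupM ?groupV.
  have gG : g \in G by case/andP: (UG ghU).
  have g'G : g' \in G by case/andP: (UG g'U).
  have e : (g, h) = (g * g'^-1, (1%g : gT2)) * (g', h) by rewrite pairM mulgKV mul1g.
  have kG : g * g'^-1 \in G by rewrite groupM ?groupV.
  have kU : (g * g'^-1, (1%g : gT2)) \in U by rewrite -inK.
  have -> : F1 g = phi (g * g'^-1) + F1 g'.
    by rewrite -F1E // -hF1 // mulgKV.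
  rewrite [in RHS]e (hf kU g'U) -/(phi _).
  by rewrite opprD addrACA subrr add0r.
exists (fun u => F1 u.1 + F2 u.2); split.
  move=> u1 u2; rewrite !inE => /andP [u11 u12] /andP [u21 u22].
  have [g1 g1U] := liftH u12; have [g2 g2U] := liftH u22.
  have g1G : g1 \in G by case/andP: (UG g1U).
  have g2G : g2 \in G by case/andP: (UG g2U).
  have g12U : (g1 * g2, u1.2 * u2.2) \in U.
    by rewrite -pairM groupM.
  rewrite /= (hF1 _ _ u11 u21) (F2E _ _ g1U) (F2E _ _ g2U) (F2E _ _ g12U).
  rewrite -pairM (hf g1U g2U) (hF1 _ _ g1G g2G).
  rewrite [RHS]addrACA; congr (_ + _).
  by rewrite opprD addrACA.
move=> [g h] ghU /=.
by rewrite (F2E _ _ ghU) addrC subrK.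
Qed.

End Assembly.

Unset Implicit Arguments.
Theorem theorem1p2 (p : nat) (gT1 gT2 : finGroupType)
  (G : {group gT1}) (H : {group gT2}) (U : {group gT1 * gT2}) :
  prime p ->
  U \subset setX G H ->
  fst @: U = G -> snd @: U = H ->
  (H2_p_part_trivial p (G / k1 U)%g \/ coinflation_p_surjective p G (k1 U)) ->
  p_extensible p G H U.
Proof.
move=> pr_p sUGH fU sU hyp A hA f hf.
exact: (extend pr_p sUGH fU sU hyp hA hf).
Qed.
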